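(* For every bipartite graph $G$ there is a monotone CNF-formula $F$ whose incidence graph is $G$ and such that $\mathbf{psw}(F)\ge 2^{\mathbf{mimw}(G)/2}$.
   Context: A CNF-formula is monotone if all literals are positive. Its incidence graph $I(F)$ is the bipartite graph on $\mathrm{var}(F)\cup\mathrm{cla}(F)$ with $x\sim C$ iff $x$ occurs in $C$. A branch decomposition $(T,\delta)$ of a graph $G$ is a tree with maximum degree $3$ and a bijection from its leaves to $V(G)$; each node $x$ of $T$ (rooted) yields the cut $(A,\bar A)$, $A$ = labels of leaves below $x$. For a symmetric $f$ on cuts, the $f$-width of $(T,\delta)$ is the max of $f$ over its cuts and the $f$-branch width of $G$ is the min over branch decompositions. $\mathbf{mimw}(G)$ is the $f$-branch width for $f(A,\bar A)$ = size of a maximum induced matching in the graph $G[A,\bar A]$ (vertex set $V(G)$, edges of $G$ between $A$ and $\bar A$). For a CNF $F$, a set $\mathcal C$ of clauses is precisely satisfiable if some assignment satisfies exactly the clauses in $\mathcal C$; the PS-value of $F$ is the number of precisely satisfiable clause sets. For $X\subseteq\mathrm{var}(F)$ and $\mathcal C\subseteq\mathrm{cla}(F)$, $F_{X,\mathcal C}$ is obtained by deleting all clauses not in $\mathcal C$ and then all variables not in $X$ from the remaining clauses. For a cut $(A,\bar A)$ of $I(F)$ with $X=A\cap\mathrm{var}(F)$, $\bar X=\bar A\cap\mathrm{var}(F)$, $\mathcal C=A\cap\mathrm{cla}(F)$, $\bar{\mathcal C}=\bar A\cap\mathrm{cla}(F)$, let $ps(A,\bar A)$ be the maximum of the PS-values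 of $F_{X,\bar{\mathcal C}}$ and $F_{\bar X,\mathcal C}$. $\mathbf{psw}(F)$ is the $ps$-branch width of $I(F)$. *)

(* Defs.v *)
From mathcomp Require Import all_boot.
Set Implicit Arguments. Unset Strict Implicit. Unset Printing Implicit Defensive.

(* A CNF formula F: its variables var(F) = cvars, its clauses cla(F) = ccls
   (both subsets of a common finite vertex type T), and for every clause vertex C
   the set of literals of C; a literal is a pair (x, b), b = true meaning the
   positive literal x and b = false the negative literal ~x.  Clauses are
   identified by their vertex, so two clauses may have equal literal sets. *)
Record cnf (T : finType) := CNF {
  cvars : {set T};
  ccls : {set T};
  clause : T -> {set T * bool}
}.

Definition cnf_wf (T : finType) (F : cnf T) : Prop :=
  [disjoint cvars F & ccls F] /\
  (forall C l, C \in ccls F -> l \in clause F C -> l.1 \in cvars F).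

Definition monotone (T : finType) (F : cnf T) : Prop :=
  forall C l, C \in ccls F -> l \in clause F C -> l.2 = true.

Definition occurs (T : finType) (F : cnf T) (x C : T) : bool :=
  ((x, true) \in clause F C) || ((x, false) \in clause F C).

Definition incidence (T : finType) (F : cnf T) : rel T :=
  fun u v =>
    [&& u \in cvars F, v \in ccls F & occurs F u v] ||
    [&& v \in cvars F, u \in ccls F & occurs F v u].

(* an assignment is the set tau of variables set to true *)
Definition sat_clause (T : finType) (tau : {set T}) (c : {set T * bool}) : bool :=
  [exists l in c, (l.1 \in tau) == l.2].

Definition psvalue (T : finType) (F : cnf T) : nat :=
  #|[set S : {set T} | [exists tau : {set T},
       (tau \subset cvars F) &&
       (S == [set C in ccls F | sat_clause tau (clause F C)])]]|.

Definition subformula (T : finType) (F : cnf T) (X Cs : {set T}) : cnf T :=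
  CNF (cvars F :&: X) (ccls F :&: Cs)
      (fun C => [set l in clause F C | l.1 \in X]).

Definition ps (T : finType) (F : cnf T) (A : {set T}) : nat :=
  maxn (psvalue (subformula F (A :&: cvars F) (~: A :&: ccls F)))
       (psvalue (subformula F (~: A :&: cvars F) (A :&: ccls F))).

(* An induced matching of G[A,~A] is given as a set M of pairs (a,b) with
   a in A, b not in A, ab an edge; it is induced iff no edge of G[A,~A] joins
   the endpoints of two different pairs (this also forces disjointness). *)
Definition induced_matching (T : finType) (e : rel T) (A : {set T})
    (M : {set T * T}) : bool :=
  [forall p in M, [&& p.1 \in A, p.2 \notin A & e p.1 p.2]] &&
  [forall p in M, forall q in M, e p.1 q.2 ==> (p == q)].

Definition mim (T : finType) (e : rel T) (A : {set T}) : nat :=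
  \max_(M : {set T * T} | induced_matching e A M) #|M|.

Definition degree (N : finType) (t : rel N) (n : N) : nat := #|[set m | t n m]|.

Definition is_tree (N : finType) (t : rel N) : Prop :=
  0 < #|N| /\ symmetric t /\ irreflexive t /\
  (forall u v, connect t u v) /\
  ~ (exists s : seq N, [&& uniq s, 2 < size s & cycle t s]).

Definition leaf (N : finType) (t : rel N) (n : N) : bool := degree t n <= 1.

Definition branch_dec (T N : finType) (t : rel N) (lab : N -> T) : Prop :=
  is_tree t /\ (forall n, degree t n <= 3) /\
  {in [pred n | leaf t n] &, injective lab} /\
  (forall x : T, exists2 n, leaf t n & lab n = x).

(* Rooting T at any node, the cut of a node x is given by the leaves below x:
   this is the side containing the child of one of the tree edges, or the
   whole vertex set for the root.  We list the sides of all tree edges in both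
   orientations: side u v = labels of leaves in the component of u in T - uv. *)
Definition side (T N : finType) (t : rel N) (lab : N -> T) (u v : N) : {set T} :=
  let t' := [rel a b | t a b && ~~ (((a == u) && (b == v)) || ((a == v) && (b == u)))] in
  [set x : T | [exists n, [&& leaf t n, lab n == x & connect t' u n]]].

Definition width (T N : finType) (f : {set T} -> nat) (t : rel N) (lab : N -> T) : nat :=
  maxn (f setT) (\max_(p : N * N | t p.1 p.2) f (side t lab p.1 p.2)).

Definition is_branchwidth (T : finType) (f : {set T} -> nat) (k : nat) : Prop :=
  (exists (N : finType) (t : rel N) (lab : N -> T), branch_dec t lab /\ width f t lab = k) /\
  (forall (N : finType) (t : rel N) (lab : N -> T), branch_dec t lab -> k <= width f t lab).

Definition bipartite_graph (T : finType) (e : rel T) : Prop :=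
  symmetric e /\ irreflexive e /\
  exists col : T -> bool, forall x y, e x y -> col x != col y.

(* Main.v *)
Require Import Defs.
From mathcomp Require Import all_boot.
Set Implicit Arguments. Unset Strict Implicit. Unset Printing Implicit Defensive.

Lemma ps_lower (T : finType) (F : cnf T) (X Cs : {set T}) (N : {set T*T}) (v c : T*T -> T) :
  monotone F ->
  (forall p, p \in N -> v p \in cvars F :&: X) ->
  (forall p, p \in N -> c p \in ccls F :&: Cs) ->
  (forall p q, p \in N -> q \in N -> (v p, true) \in clause F (c q) -> p = q) ->
  (forall p, p \in N -> (v p, true) \in clause F (c p)) ->
  2 ^ #|N| <= psvalue (subformula F X Cs).
Proof.
move=> mon Hv Hc Hinj Hin.
pose S (P : {set T*T}) : {set T} :=
  [set C in ccls (subformula F X Cs) | sat_clause (v @: P) (clause (subformula F X Cs) C)].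
have key : forall (P : {set T*T}) q, P \subset N -> q \in N -> (c q \in S P) = (q \in P).
  move=> P q sPN qN; rewrite /S inE /= Hc //=.
  apply/idP/idP.
  - case/existsP=> l /andP [] /=; rewrite inE => /andP [lC lX].
    have l2 : l.2 = true by apply: (mon (c q)); [move: (Hc q qN); rewrite inE => /andP [] | ].
    rewrite l2 eqb_id => /imsetP [p pP pe].
    have pN : p \in N by apply: (subsetP sPN).
    have -> : q = p; last by [].
    symmetry; apply: Hinj => //.
    by move: lC; case: l l2 pe {lX} => /= a b -> ->.
  - move=> qP; apply/existsP; exists (v q, true); rewrite /= inE /= Hin //=.
    have := Hv q qN; rewrite inE => /andP [_ ->] /=.
    by rewrite eqb_id; apply/imsetP; exists q.
rewrite -card_powerset.
have inj : {in powerset N &, injective S}.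
  move=> P P'; rewrite !inE => sP sP' eS; apply/setP=> x.
  apply/idP/idP => xP.
  - have xN : x \in N by apply: (subsetP sP).
    by rewrite -(key _ _ sP' xN) -eS key.
  - have xN : x \in N by apply: (subsetP sP').
    by rewrite -(key _ _ sP xN) eS key.
rewrite -(card_in_imset inj) /psvalue; apply: subset_leq_card.
apply/subsetP=> s /imsetP [P PN ->]; rewrite inE; apply/existsP; exists (v @: P).
rewrite eqxx andbT; apply/subsetP=> y /imsetP [p pP ->] /=.
rewrite inE in PN; exact: Hv (subsetP PN p pP).
Qed.

Lemma width_bound (T N : finType) (f g : {set T} -> nat) (t : rel N) (lab : N -> T) :
  (forall A, 2 ^ f A <= g A ^ 2) -> 2 ^ width f t lab <= width g t lab ^ 2.
Proof.
move=> H.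
set W := width g t lab.
have gle : forall A, (A = setT \/ exists2 p : N * N, t p.1 p.2 & A = side t lab p.1 p.2) ->
    g A <= W.
  move=> A [->|[p tp ->]]; rewrite /W /width; first exact: leq_maxl.
  apply: leq_trans (leq_maxr _ _); exact: (leq_bigmax_cond _ tp).
have Q : forall A, (A = setT \/ exists2 p : N * N, t p.1 p.2 & A = side t lab p.1 p.2) ->
    2 ^ f A <= W ^ 2.
  move=> A hA; apply: leq_trans (H A) _; rewrite leq_exp2r //; exact: gle.
have W1 : 1 <= W ^ 2 by apply: leq_trans (Q setT (or_introl erefl)); rewrite expn_gt0.
rewrite /width; case: (leqP (f setT) (\max_(p : N * N | t p.1 p.2) f (side t lab p.1 p.2))) => h.
- 
  elim/big_ind: _ => //.
  + move=> x y hx hy; case: (leqP x y) => xy; by [].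
  + move=> p tp; apply: Q; right; by exists p.
- exact: Q (or_introl erefl).
Qed.

Theorem lemma10 (T : finType) (e : rel T) :
  bipartite_graph e ->
  exists F : cnf T,
    [/\ cnf_wf F, monotone F,
        cvars F :|: ccls F = setT,
        (forall x y, incidence F x y = e x y) &
        forall m p, is_branchwidth (mim e) m -> is_branchwidth (ps F) p ->
          2 ^ m <= p ^ 2].
Proof.
move=> [esym [eirr [col hcol]]].
pose F := CNF [set x | col x] [set x | ~~ col x] (fun C => [set l : T * bool | l.2 && e l.1 C]).
have inclF : forall x C b, ((x, b) \in clause F C) = b && e x C by move=> x C b; rewrite inE.
have mon : monotone F by move=> C l _; rewrite inE => /andP [->].
have cut : forall A, 2 ^ mim e A <= ps F A ^ 2.
  move=> A; rewrite /mim.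
  have ne : 0 < #|[pred M : {set T*T} | induced_matching e A M]|.
    apply/card_gt0P; exists set0; rewrite inE /induced_matching.
    by apply/andP; split; apply/forall_inP => p; rewrite inE.
  have [M Mi Meq] := eq_bigmax_cond (fun M : {set T*T} => #|M|) ne.
  have -> : \max_(M : {set T * T} | induced_matching e A M) #|M| = #|M| by exact: Meq.
  move: Mi; rewrite inE => Mi.
  case/andP: Mi => /forall_inP H1 /forall_inP H2.
  have H2' : forall p q, p \in M -> q \in M -> e p.1 q.2 -> p = q.
    by move=> p q pM qM epq; apply/eqP; move/forall_inP: (H2 p pM) => /(_ q qM) /implyP; apply.
  pose Q := [set p : T * T | col p.1].
  rewrite -(cardsID Q M) expnD expnS expn1 /ps; apply: leq_mul.
  - apply: leq_trans (leq_maxl _ _).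
    apply: ps_lower (fun p => p.1) (fun p => p.2) _ _ _ _ _ => // [p|p|p q|p]; rewrite ?inE /=.
    + by case/andP => /H1 /and3P [pA _ _] cp; rewrite cp pA.
    + case/andP => /H1 /and3P [_ pA ep] cp /=; rewrite pA.
      by move: (hcol _ _ ep); rewrite cp; case: (col p.2).
    + by move=> /andP [pM _] /andP [qM _] /= /(H2' p q pM qM).
    + by case/andP => /H1 /and3P [_ _ ->].
  - apply: leq_trans (leq_maxr _ _).
    apply: ps_lower (fun p => p.2) (fun p => p.1) _ _ _ _ _ => // [p|p|p q|p]; rewrite ?inE /=.
    + case/andP => cp /H1 /and3P [_ pA ep] /=; rewrite pA.
      by move: (hcol _ _ ep); move: cp; case: (col p.1); case: (col p.2).
    + by case/andP => cp /H1 /and3P [pA _ _]; rewrite cp pA.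
    + by move=> /andP [_ pM] /andP [_ qM] /=; rewrite esym => /(H2' q p qM pM) ->.
    + by case/andP => _ /H1 /and3P [_ _ ep]; rewrite /= esym.
exists F; split.
- split; first by rewrite disjoint_subset; apply/subsetP => x; rewrite !inE => ->.
  move=> C l; rewrite !inE => cC /andP [_ el] /=.
  by move: (hcol _ _ el) cC; case: (col l.1); case: (col C).
- exact: mon.
- by apply/setP => x; rewrite !inE; case: (col x).
- move=> x y; rewrite /incidence /occurs !inclF /= !inE orbF.
  case exy: (e x y); last by rewrite esym exy !andbF.
  rewrite esym exy !andbT; move: (hcol _ _ exy); case: (col x); case: (col y) => //.
- move=> m p [_ Hm] [[N [t [lab [bd <-]]]] _].
  apply: leq_trans (width_bound _ _ cut).
  by rewrite leq_exp2l //; apply: Hm.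
Qed.
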